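(* Let $R\in\{\mathrm{ML},\mathrm{wML},\mathrm{C},\mathrm{S}\}$, let $\varphi$ be a precise forecasting system and let $[p,q]\in\mathscr I$ with $p<q$. If $\Omega_R(\varphi)=\Omega_R([p,q])$, then $\varphi$ is non-computable and non-stationary.
   Context: Notation: $\mathbb N=\{1,2,\dots\}$, $\mathbb N_0=\mathbb N\cup\{0\}$. $\Omega=\{0,1\}^{\mathbb N}$ is the set of paths $\omega=(\omega_1,\omega_2,\dots)$; $\omega_{1:n}=(\omega_1,\dots,\omega_n)$, $\omega_{1:0}=\square$. $\mathbb S=\bigcup_{n\in\mathbb N_0}\{0,1\}^n$ is the set of situations, $|s|$ the length, $sx$ concatenation. $\mathscr I$ is the set of closed intervals $I\subseteq[0,1]$. For $r\in[0,1]$ and $f:\{0,1\}\to\mathbb R$, $E_r(f)=rf(1)+(1-r)f(0)$; $\overline E_I(f)=\max_{r\in I}E_r(f)$. A forecasting system is a map $\varphi:\mathbb S\to\mathscr I$; $\underline\varphi(s)=\min\varphi(s)$, $\overline\varphi(s)=\max\varphi(s)$; it is precise if every $\varphi(s)$ is a singleton, stationary if constant (then identified with its value $I$). A real process is $F:\mathbb S\to\mathbb R$; $\Delta F(s)$ is $x\mapsto F(sx)-F(s)$. $M$ is a supermartingale for $\varphi$ if $\overline E_{\varphi(s)}(\Delta M(s))\le0$ for all $s$. A test process is a non-negative real process with $F(\square)=1$; a test supermartingale for $\varphi$ is a test process that is a supermartingale for $\varphi$. A multiplier process $D$ assigns to each $s$ a function $D(s):\{0,1\}\to[0,\infty)$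 and generates the test process $F(\square)=1$, $F(sx)=F(s)D(s)(x)$. Computability: maps from countable effectively encoded domains to $\mathbb N_0$ or $\mathbb Q$ are recursive if Turing-computable; a real map $r$ on a domain $\mathscr D$ is lower semicomputable if $r(d)=\lim_nq(d,n)$ for a recursive rational $q$ non-decreasing in $n$, computable if $|r(d)-q(d,n)|<2^{-n}$ for some recursive rational $q$. A forecasting system is computable if $\underline\varphi$ and $\overline\varphi$ are computable real maps on $\mathbb S$. $\mathscr F_{\mathrm{ML}}$: lower semicomputable test processes; $\mathscr F_{\mathrm{wML}}$: test processes generated by lower semicomputable multiplier processes; $\mathscr F_{\mathrm C}=\mathscr F_{\mathrm S}$: positive rational-valued recursive test processes. $\overline{\mathbb T}_R(\varphi)$: elements of $\mathscr F_R$ that are test supermartingales for $\varphi$. For $R\in\{\mathrm{ML},\mathrm{wML},\mathrm C\}$, $\omega$ is $R$-random for $\varphi$ if no $T\in\overline{\mathbb T}_R(\varphi)$ has $\limsup_nT(\omega_{1:n})=\infty$. A real growth function is a computable, non-decreasing, unbounded $\tau:\mathbb N_0\to[0,\infty)$; $\omega$ is S-random for $\varphi$ if there are no $T\in\overline{\mathbb T}_{\mathrm S}(\varphi)$ and real growth function $\tau$ with $\limsup_n[T(\omega_{1:n})-\tau(n)]\ge0$. $\Omega_R(\varphi)$ is the set of paths that are $R$-random for $\varphi$; for an interval $I$, $\Omega_R(I)$ refers to the stationary forecasting system with value $I$. *)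

(* Defs.v *)
From Stdlib Require Import Reals Lra List.
From Coquelicot Require Import Coquelicot.
Import ListNotations.
Open Scope R_scope.

Inductive code : Type :=
| CZero : code
| CSucc : code
| CProj : nat -> code
| CComp : code -> list code -> code
| CPrec : code -> code -> code
| CMu   : code -> code.

Inductive eval : code -> list nat -> nat -> Prop :=
| eZero v : eval CZero v 0
| eSucc x v : eval CSucc (x :: v) (S x)
| eProj i v : eval (CProj i) v (nth i v 0%nat)
| eComp f gs v ys y : evals gs v ys -> eval f ys y -> eval (CComp f gs) v y
| ePrec0 f g v y : eval f v y -> eval (CPrec f g) (0%nat :: v) y
| ePrecS f g n v r y :
    eval (CPrec f g) (n :: v) r -> eval g (n :: r :: v) y ->
    eval (CPrec f g) (S n :: v) y
| eMu f v n :
    eval f (n :: v) 0%nat ->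
    (forall m, (m < n)%nat -> exists k, eval f (m :: v) (S k)) ->
    eval (CMu f) v n
with evals : list code -> list nat -> list nat -> Prop :=
| esNil v : evals [] v []
| esCons g gs v y ys : eval g v y -> evals gs v ys -> evals (g :: gs) v (y :: ys).

Definition nat_recursive (k : nat) (f : list nat -> nat) : Prop :=
  exists c, forall v, length v = k -> eval c v (f v).

Definition rat_recursive (k : nat) (q : list nat -> R) : Prop :=
  exists a b c : list nat -> nat,
    nat_recursive k a /\ nat_recursive k b /\ nat_recursive k c /\
    forall v, length v = k ->
      q v = (INR (a v) - INR (b v)) / (INR (c v) + 1).

Definition sit := list bool.          (* s x is written s ++ [x] *)

(* effective bijection between situations and naturals *)
Fixpoint code_sit (s : sit) : nat :=
  match s with
  | [] => 0%nat
  | b :: t => (2 * code_sit t + (if b then 2 else 1))%nat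
  end.

Definition enc_S (s : sit) : list nat := [code_sit s].
Definition enc_SB (d : sit * bool) : list nat :=
  [code_sit (fst d); if snd d then 1%nat else 0%nat].
Definition enc_N (n : nat) : list nat := [n].

(* omega : nat -> bool, with omega_i = omega (i-1); omega_{1:n} *)
Definition prefix (w : nat -> bool) (n : nat) : sit := map w (seq 0 n).

Definition lower_semicomputable {D : Type} (k : nat) (enc : D -> list nat)
  (r : D -> R) : Prop :=
  exists q, rat_recursive (S k) q /\
    forall d, (forall n, q (enc d ++ [n]) <= q (enc d ++ [S n])) /\
              Un_cv (fun n => q (enc d ++ [n])) (r d).

Definition computable_real {D : Type} (k : nat) (enc : D -> list nat)
  (r : D -> R) : Prop :=
  exists q, rat_recursive (S k) q /\
    forall d n, Rabs (r d - q (enc d ++ [n])) < / 2 ^ n.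

(* phi s = (lower bound, upper bound) of the closed interval phi(s) *)
Definition fsys := sit -> R * R.

Definition forecasting_system (phi : fsys) : Prop :=
  forall s, 0 <= fst (phi s) /\ fst (phi s) <= snd (phi s) /\ snd (phi s) <= 1.

Definition precise (phi : fsys) : Prop := forall s, fst (phi s) = snd (phi s).

Definition stationary (phi : fsys) : Prop := exists I, forall s, phi s = I.

Definition computable_fs (phi : fsys) : Prop :=
  computable_real 1 enc_S (fun s => fst (phi s)) /\
  computable_real 1 enc_S (fun s => snd (phi s)).

Definition stat (p q : R) : fsys := fun _ => (p, q).

Definition process := sit -> R.

Definition E_r (r : R) (f : bool -> R) : R := r * f true + (1 - r) * f false.

(* overline E_{phi(s)}(Delta M(s)) <= 0, i.e. max over r in phi(s) is <= 0 *)
Definition supermartingale (phi : fsys) (M : process) : Prop :=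
  forall s r, fst (phi s) <= r <= snd (phi s) ->
    E_r r (fun x => M (s ++ [x]) - M s) <= 0.

Definition test_process (F : process) : Prop :=
  (forall s, 0 <= F s) /\ F [] = 1.

Definition generated_by (D : sit -> bool -> R) (F : process) : Prop :=
  F [] = 1 /\ forall s x, F (s ++ [x]) = F s * D s x.

Inductive rtype : Type := ML | wML | Cr | Sr.

Definition test_class (Rt : rtype) (F : process) : Prop :=
  match Rt with
  | ML => test_process F /\ lower_semicomputable 1 enc_S F
  | wML => exists D : sit -> bool -> R,
             (forall s x, 0 <= D s x) /\
             lower_semicomputable 2 enc_SB (fun d => D (fst d) (snd d)) /\
             generated_by D F
  | Cr | Sr => test_process F /\ (forall s, 0 < F s) /\
             exists q, rat_recursive 1 q /\ forall s, F s = q (enc_S s)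
  end.

Definition test_supermartingale_in (Rt : rtype) (phi : fsys) (T : process) :=
  test_class Rt T /\ test_process T /\ supermartingale phi T.

Definition real_growth (tau : nat -> R) : Prop :=
  computable_real 1 enc_N tau /\ (forall n, 0 <= tau n) /\
  (forall n, tau n <= tau (S n)) /\ (forall M, exists n, M < tau n).

Definition random (Rt : rtype) (phi : fsys) (w : nat -> bool) : Prop :=
  match Rt with
  | Sr => ~ exists T tau, test_supermartingale_in Sr phi T /\ real_growth tau /\
            Rbar_le (Finite 0) (LimSup_seq (fun n => T (prefix w n) - tau n))
  | _ => ~ exists T, test_supermartingale_in Rt phi T /\
            LimSup_seq (fun n => T (prefix w n)) = p_infty
  end.

(* Main.v *)
Require Import Defs.
From Stdlib Require Import Reals List Lia Lra Arith ZArith Cantor ClassicalEpsilon FunctionalExtensionality.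
From Coquelicot Require Import Coquelicot.
Import ListNotations.
Open Scope R_scope.

Section CodeInd.
Variable P : code -> Prop.
Hypothesis H0 : P CZero.
Hypothesis H1 : P CSucc.
Hypothesis H2 : forall i, P (CProj i).
Hypothesis H3 : forall f gs, P f -> List.Forall P gs -> P (CComp f gs).
Hypothesis H4 : forall f g, P f -> P g -> P (CPrec f g).
Hypothesis H5 : forall f, P f -> P (CMu f).
Fixpoint code_ind' (c : code) : P c :=
  match c with
  | CZero => H0 | CSucc => H1 | CProj i => H2 i
  | CComp f gs => H3 f gs (code_ind' f)
      ((fix go l : List.Forall P l := match l with
         | [] => List.Forall_nil _ | g :: l' => List.Forall_cons _ (code_ind' g) (go l') end) gs)
  | CPrec f g => H4 f g (code_ind' f) (code_ind' g)
  | CMu f => H5 f (code_ind' f)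
  end.
End CodeInd.

Lemma eval_det : forall c v y y', eval c v y -> eval c v y' -> y = y'.
Proof.
  intro c; induction c using code_ind'; intros v y y' E1 E2.
  - inversion E1; inversion E2; subst; auto.
  - inversion E1; inversion E2; subst; congruence.
  - inversion E1; inversion E2; subst; auto.
  - inversion E1; subst; inversion E2; subst.
    match goal with A : evals gs v ?ys1, B : evals gs v ?ys2 |- _ =>
      assert (ys1 = ys2) by (clear -H A B; revert ys1 ys2 A B; induction H; intros ys ys0 A B;
        [inversion A; inversion B; auto | inversion A; inversion B; subst; f_equal; eauto]) end.
    subst; eauto.
  - assert (forall n w y y', eval (CPrec c1 c2) (n :: w) y -> eval (CPrec c1 c2) (n :: w) y' -> y = y').
    { induction n; intros w z z' A B; inversion A; inversion B; subst; eauto.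
      assert (r = r0) by eauto. subst; eauto. }
    destruct v. inversion E1. eauto.
  - inversion E1 as [| | | | | |f1 v1 n1 Z1 L1]; subst; inversion E2 as [| | | | | |f2 v2 n2 Z2 L2]; subst.
    destruct (lt_eq_lt_dec y y') as [[Hl|He]|Hl]; auto.
    + destruct (L2 _ Hl) as [k Hk]. specialize (IHc _ _ _ Z1 Hk). discriminate.
    + destruct (L1 _ Hl) as [k Hk]. specialize (IHc _ _ _ Z2 Hk). discriminate.
Qed.

Definition computes (c : code) (k : nat) (f : list nat -> nat) : Prop :=
  forall v, length v = k -> eval c v (f v).

Lemma c_ext c k f f' : computes c k f -> (forall v, length v = k -> f v = f' v) -> computes c k f'.
Proof. intros H E v L. rewrite <- E by auto. auto. Qed.

Lemma c_zero k : computes CZero k (fun _ => 0%nat).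
Proof. intros v _. constructor. Qed.

Lemma c_proj i k : (i < k)%nat -> computes (CProj i) k (fun v => nth i v 0%nat).
Proof. intros _ v _. constructor. Qed.

Lemma c_comp f m F gs k Gs : computes f m F -> List.Forall2 (fun g G => computes g k G) gs Gs ->
  length Gs = m -> computes (CComp f gs) k (fun v => F (map (fun G => G v) Gs)).
Proof.
  intros HF HG HL v Lv. apply eComp with (ys := map (fun G => G v) Gs).
  - clear HF HL. induction HG; simpl; constructor; auto.
  - apply HF. rewrite length_map; auto.
Qed.

Lemma c_comp1 f F g G k : computes f 1 F -> computes g k G -> computes (CComp f [g]) k (fun v => F [G v]).
Proof. intros. apply (c_comp f 1 F [g] k [G]); auto. Qed.
Lemma c_comp2 f F g1 G1 g2 G2 k : computes f 2 F -> computes g1 k G1 -> computes g2 k G2 ->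
  computes (CComp f [g1; g2]) k (fun v => F [G1 v; G2 v]).
Proof. intros. apply (c_comp f 2 F [g1; g2] k [G1; G2]); auto. Qed.
Lemma c_comp3 f F g1 G1 g2 G2 g3 G3 k : computes f 3 F -> computes g1 k G1 -> computes g2 k G2 ->
  computes g3 k G3 -> computes (CComp f [g1; g2; g3]) k (fun v => F [G1 v; G2 v; G3 v]).
Proof. intros. apply (c_comp f 3 F [g1; g2; g3] k [G1; G2; G3]); auto. Qed.

Fixpoint precf (F G : list nat -> nat) (n : nat) (w : list nat) : nat :=
  match n with 0%nat => F w | S n' => G (n' :: precf F G n' w :: w) end.

Lemma c_prec f g k F G : computes f k F -> computes g (S (S k)) G ->
  computes (CPrec f g) (S k) (fun v => match v with n :: w => precf F G n w | [] => 0%nat end).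
Proof.
  intros HF HG [|n w] L; simpl in L; [discriminate|]. injection L as L.
  induction n; simpl.
  - constructor. auto.
  - econstructor. exact IHn. apply HG. simpl. lia.
Qed.

Fixpoint cst (n : nat) : code := match n with 0%nat => CZero | S n' => CComp CSucc [cst n'] end.
Lemma c_cst n k : computes (cst n) k (fun _ => n).
Proof.
  induction n; intros v L; simpl. constructor.
  apply eComp with (ys := [n]); [constructor; [apply IHn; auto | constructor] | constructor].
Qed.

Ltac lenv v := let L := fresh "L" in intros v L;
  repeat (destruct v as [|? v]; simpl in L; try discriminate); simpl.

Definition F1 (f : nat -> nat) := fun v : list nat => f (nth 0 v 0%nat).
Definition F2 (f : nat -> nat -> nat) := fun v : list nat => f (nth 0 v 0%nat) (nth 1 v 0%nat).
Definition F3 (f : nat -> nat -> nat -> nat) :=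
  fun v : list nat => f (nth 0 v 0%nat) (nth 1 v 0%nat) (nth 2 v 0%nat).

Definition is1 c f := computes c 1 (F1 f).
Definition is2 c f := computes c 2 (F2 f).
Definition is3 c f := computes c 3 (F3 f).

Lemma u1 c f g G k : is1 c f -> computes g k G -> computes (CComp c [g]) k (fun v => f (G v)).
Proof. intros H1 H2. eapply c_ext. apply (c_comp1 _ _ _ _ _ H1 H2). intros; reflexivity. Qed.
Lemma u2 c f g1 G1 g2 G2 k : is2 c f -> computes g1 k G1 -> computes g2 k G2 ->
  computes (CComp c [g1; g2]) k (fun v => f (G1 v) (G2 v)).
Proof. intros H1 H2 H3. eapply c_ext. apply (c_comp2 _ _ _ _ _ _ _ H1 H2 H3). intros; reflexivity. Qed.
Lemma u3 c f g1 G1 g2 G2 g3 G3 k : is3 c f -> computes g1 k G1 -> computes g2 k G2 -> computes g3 k G3 ->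
  computes (CComp c [g1; g2; g3]) k (fun v => f (G1 v) (G2 v) (G3 v)).
Proof. intros H1 H2 H3 H4. eapply c_ext. apply (c_comp3 _ _ _ _ _ _ _ _ _ H1 H2 H3 H4). intros; reflexivity. Qed.

Lemma pj i k : (i < k)%nat -> computes (CProj i) k (fun v => nth i v 0%nat).
Proof. apply c_proj. Qed.

Definition c_add := CPrec (CProj 0) (CComp CSucc [CProj 1]).
Lemma is_add : is2 c_add Nat.add.
Proof.
  eapply c_ext. apply c_prec. apply (pj 0 1); lia.
  apply (u1 CSucc S). lenv v. constructor. apply pj; lia.
  lenv v. unfold F2; simpl. induction n; simpl; auto.
Qed.

Lemma prec1 f g b step (h : nat -> nat) : computes f 0 (fun _ => b) -> is2 g step ->
  h 0%nat = b -> (forall j, h (S j) = step j (h j)) -> is1 (CPrec f g) h.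
Proof.
  intros Hf Hg H0 HS. eapply c_ext. apply c_prec. exact Hf.
  eapply c_ext. exact Hg. lenv v. reflexivity.
  lenv v. unfold F1; simpl. induction n; simpl. now rewrite H0. rewrite HS, IHn. reflexivity.
Qed.

Lemma prec2 f g base step (h : nat -> nat -> nat) : is1 f base -> is3 g step ->
  (forall n, h 0%nat n = base n) -> (forall j n, h (S j) n = step j (h j n) n) -> is2 (CPrec f g) h.
Proof.
  intros Hf Hg H0 HS. eapply c_ext. apply c_prec. exact Hf. exact Hg.
  lenv v. unfold F2; simpl. induction n; simpl. now rewrite H0. rewrite HS, IHn. reflexivity.
Qed.

Ltac arith_goal := let v := fresh "v" in lenv v; try reflexivity.

Definition c_mul := CPrec CZero (CComp c_add [CProj 1; CProj 2]).
Lemma is_mul : is2 c_mul Nat.mul.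
Proof.
  eapply prec2 with (base := fun _ => 0%nat) (step := fun j r n => (r + n)%nat).
  apply c_zero. eapply c_ext. apply u2. apply is_add. apply pj; lia. apply pj; lia. arith_goal.
  reflexivity. intros; simpl; lia.
Qed.

Definition c_pred := CPrec CZero (CProj 0).
Lemma is_pred : is1 c_pred Nat.pred.
Proof.
  eapply prec1 with (b := 0%nat) (step := fun j r => j). apply c_zero.
  eapply c_ext. apply pj with (i := 0%nat); lia. arith_goal. reflexivity. reflexivity.
Qed.

Definition c_subr := CPrec (CProj 0) (CComp c_pred [CProj 1]).
Lemma is_subr : is2 c_subr (fun y x => x - y)%nat.
Proof.
  eapply prec2 with (base := fun n => n) (step := fun j r n => Nat.pred r).
  eapply c_ext. apply pj with (i := 0%nat); lia. arith_goal.
  eapply c_ext. apply u1. apply is_pred. apply pj; lia. arith_goal.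
  intros; lia. intros; simpl; lia.
Qed.

Definition c_sub := CComp c_subr [CProj 1; CProj 0].
Lemma is_sub : is2 c_sub Nat.sub.
Proof. eapply c_ext. apply u2. apply is_subr. apply pj; lia. apply pj; lia. arith_goal. Qed.

Definition c_one := cst 1.
Fixpoint oddn (n : nat) : nat := match n with 0%nat => 0%nat | S n' => (1 - oddn n')%nat end.
Definition c_odd := CPrec CZero (CComp c_sub [c_one; CProj 1]).
Lemma is_odd : is1 c_odd oddn.
Proof.
  eapply prec1 with (b := 0%nat) (step := fun j r => (1 - r)%nat). apply c_zero.
  eapply c_ext. apply u2. apply is_sub. apply c_cst. apply pj; lia. arith_goal. reflexivity. reflexivity.
Qed.

Lemma oddn_01 n : oddn n = 0%nat \/ oddn n = 1%nat.
Proof. induction n; [simpl; auto|]. simpl. destruct IHn as [E|E]; rewrite E; simpl; auto. Qed.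

Fixpoint div2n (n : nat) : nat := match n with 0%nat => 0%nat | S n' => (div2n n' + oddn n')%nat end.
Definition c_div2 := CPrec CZero (CComp c_add [CProj 1; CComp c_odd [CProj 0]]).
Lemma is_div2 : is1 c_div2 div2n.
Proof.
  eapply prec1 with (b := 0%nat) (step := fun j r => (r + oddn j)%nat). apply c_zero.
  eapply c_ext. apply u2. apply is_add. apply pj; lia. apply u1. apply is_odd. apply pj; lia.
  arith_goal. reflexivity. reflexivity.
Qed.

Lemma div2n_odd n : (2 * div2n n + oddn n = n)%nat.
Proof. induction n; simpl in *; auto. destruct (oddn_01 n) as [E|E]; rewrite E in *; simpl; lia. Qed.

Definition hn (m : nat) := div2n (Nat.pred m).
Definition c_h := CComp c_div2 [c_pred].
Lemma is_h : is1 c_h hn.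
Proof. eapply c_ext. apply u1. apply is_div2. apply is_pred. arith_goal. Qed.

Fixpoint Rsh (j n : nat) : nat := match j with 0%nat => n | S j' => hn (Rsh j' n) end.
Definition c_R := CPrec (CProj 0) (CComp c_h [CProj 1]).
Lemma is_R : is2 c_R Rsh.
Proof.
  eapply prec2 with (base := fun n => n) (step := fun j r n => hn r).
  eapply c_ext. apply pj with (i := 0%nat); lia. arith_goal.
  eapply c_ext. apply u1. apply is_h. apply pj; lia. arith_goal. reflexivity. reflexivity.
Qed.

Definition c_pow2 := CPrec c_one (CComp c_add [CProj 1; CProj 1]).
Lemma is_pow2 : is1 c_pow2 (fun j => 2 ^ j)%nat.
Proof.
  eapply prec1 with (b := 1%nat) (step := fun j r => (r + r)%nat). apply c_cst.
  eapply c_ext. apply u2. apply is_add. apply pj; lia. apply pj; lia. arith_goal. reflexivity.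
  intros; simpl; lia.
Qed.

Definition Pre (j n : nat) := (n - 2 ^ j * Rsh j n)%nat.
Definition c_P := CComp c_sub [CProj 1; CComp c_mul [CComp c_pow2 [CProj 0]; c_R]].
Lemma is_P : is2 c_P Pre.
Proof.
  eapply c_ext. apply u2. apply is_sub. apply pj; lia. apply u2. apply is_mul.
  apply u1. apply is_pow2. apply pj; lia. apply is_R. arith_goal.
Qed.

Definition sgn (m : nat) := (1 - (1 - m))%nat.
Definition c_sg := CComp c_sub [c_one; CComp c_sub [c_one; CProj 0]].
Lemma is_sg : is1 c_sg sgn.
Proof.
  eapply c_ext. apply u2. apply is_sub. apply c_cst. apply u2. apply is_sub. apply c_cst.
  apply pj; lia. arith_goal.
Qed.

Definition bitn (m : nat) := (sgn m * (1 - oddn m))%nat.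
Definition c_bit := CComp c_mul [c_sg; CComp c_sub [c_one; c_odd]].
Lemma is_bit : is1 c_bit bitn.
Proof.
  eapply c_ext. apply u2. apply is_mul. apply is_sg. apply u2. apply is_sub. apply c_cst.
  apply is_odd. arith_goal.
Qed.

Definition seln (c x y : nat) := (sgn c * x + (1 - sgn c) * y)%nat.
Definition c_sel := CComp c_add [CComp c_mul [CComp c_sg [CProj 0]; CProj 1];
                                 CComp c_mul [CComp c_sub [c_one; CComp c_sg [CProj 0]]; CProj 2]].
Lemma is_sel : is3 c_sel seln.
Proof.
  eapply c_ext. apply u2. apply is_add.
  apply u2. apply is_mul. apply u1. apply is_sg. apply pj; lia. apply pj; lia.
  apply u2. apply is_mul. apply u2. apply is_sub. apply c_cst. apply u1. apply is_sg. apply pj; lia.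
  apply pj; lia. arith_goal.
Qed.

Lemma seln_0 x y : seln 0 x y = y.
Proof. unfold seln, sgn; simpl; lia. Qed.
Lemma seln_S c x y : seln (S c) x y = x.
Proof. unfold seln, sgn; simpl. replace (c - c)%nat with 0%nat by lia. lia. Qed.

Definition le01 (x y : nat) := (1 - (x - y))%nat.
Definition c_le := CComp c_sub [c_one; c_sub].
Lemma is_le : is2 c_le le01.
Proof. eapply c_ext. apply u2. apply is_sub. apply c_cst. apply is_sub. arith_goal. Qed.

Definition bv (b : bool) : nat := if b then 1%nat else 0%nat.

Lemma oddn_SS n : oddn (S (S n)) = oddn n.
Proof. simpl. destruct (oddn_01 n) as [E|E]; rewrite E; reflexivity. Qed.
Lemma oddn_double c : oddn (2 * c) = 0%nat /\ oddn (S (2 * c)) = 1%nat.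
Proof.
  induction c. simpl; auto.
  replace (2 * S c)%nat with (S (S (2 * c))) by lia. rewrite oddn_SS.
  replace (S (S (S (2 * c)))) with (S (S (S (2*c)))) by lia. rewrite oddn_SS. auto.
Qed.
Lemma div2n_double c : div2n (2 * c) = c /\ div2n (S (2 * c)) = c.
Proof.
  destruct (oddn_double c) as [A B].
  pose proof (div2n_odd (2 * c)) as E1. pose proof (div2n_odd (S (2 * c))) as E2.
  rewrite A in E1. rewrite B in E2. split; lia.
Qed.

Lemma code_cons b t : code_sit (b :: t) = (2 * code_sit t + (if b then 2 else 1))%nat.
Proof. reflexivity. Qed.

Lemma hn_code b t : hn (code_sit (b :: t)) = code_sit t.
Proof.
  unfold hn; rewrite code_cons. destruct (div2n_double (code_sit t)) as [A B]. destruct b.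
  - replace (Nat.pred (2 * code_sit t + 2)) with (S (2 * code_sit t)) by lia. auto.
  - replace (Nat.pred (2 * code_sit t + 1)) with (2 * code_sit t)%nat by lia. auto.
Qed.

Lemma hn_tl w : hn (code_sit w) = code_sit (tl w).
Proof. destruct w. reflexivity. apply hn_code. Qed.

Lemma skipn_S_tl : forall (j : nat) (u : sit), skipn (S j) u = tl (skipn j u).
Proof. induction j; intros [|x u]; simpl; auto. apply IHj. Qed.

Lemma Rsh_code j u : Rsh j (code_sit u) = code_sit (skipn j u).
Proof. induction j. reflexivity. change (Rsh (S j) (code_sit u)) with (hn (Rsh j (code_sit u))). rewrite IHj, hn_tl, skipn_S_tl. reflexivity. Qed.

Lemma code_app u w : code_sit (u ++ w) = (code_sit u + 2 ^ length u * code_sit w)%nat.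
Proof. induction u as [|b u IH]; simpl app. simpl; lia. rewrite !code_cons, IH. simpl length. rewrite Nat.pow_succ_r'. destruct b; lia. Qed.

Lemma code_nil_iff w : code_sit w = 0%nat <-> w = [].
Proof. destruct w; simpl; split; intro H; try discriminate; auto. destruct b; lia. Qed.

Lemma Pre_code j u : Pre j (code_sit u) = code_sit (firstn j u).
Proof.
  unfold Pre. rewrite Rsh_code.
  rewrite <- (firstn_skipn j u) at 1. rewrite code_app.
  destruct (le_lt_dec j (length u)).
  - rewrite length_firstn. replace (Nat.min j (length u)) with j by lia. lia.
  - rewrite (skipn_all2 u) by lia. simpl. lia.
Qed.

Lemma length_le_code u : (length u <= code_sit u)%nat.
Proof. induction u; simpl length. simpl; lia. rewrite code_cons. destruct a; lia. Qed.

Lemma bitn_code b t : bitn (code_sit (b :: t)) = bv b.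
Proof.
  unfold bitn, sgn. rewrite code_cons. destruct (oddn_double (code_sit t)) as [A B]. destruct b; simpl bv.
  - replace (2 * code_sit t + 2)%nat with (2 * S (code_sit t))%nat by lia.
    destruct (oddn_double (S (code_sit t))) as [C _]. rewrite C. lia.
  - replace (2 * code_sit t + 1)%nat with (S (2 * code_sit t))%nat by lia. rewrite B. lia.
Qed.

Lemma skipn_nth : forall (l : list bool) j, (j < length l)%nat -> skipn j l = nth j l false :: skipn (S j) l.
Proof. induction l; intros j H; simpl in H. lia. destruct j. reflexivity. simpl. apply IHl. lia. Qed.

Lemma firstn_app_le j (u w : list bool) : (j <= length u)%nat -> firstn j (u ++ w) = firstn j u.
Proof. intro H. rewrite firstn_app. replace (j - length u)%nat with 0%nat by lia. simpl. apply app_nil_r. Qed.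

Lemma seln_code b t X Y : seln (code_sit (b :: t)) X Y = X.
Proof. rewrite code_cons. replace (2 * code_sit t + (if b then 2 else 1))%nat with (S (2 * code_sit t + (if b then 1 else 0)))%nat by (destruct b; lia). apply seln_S. Qed.

(* generic product along prefixes *)
Section Prod.
Variable G : nat -> nat -> nat.
Definition facG (j n : nat) := seln (Rsh j n) (G (Pre j n) (bitn (Rsh j n))) 1.
Fixpoint ProdP (j n : nat) : nat := match j with 0%nat => 1%nat | S j' => (ProdP j' n * facG j' n)%nat end.
Definition ProdF (n : nat) := ProdP n n.

Lemma facG_out j u : (length u <= j)%nat -> facG j (code_sit u) = 1%nat.
Proof. intro H. unfold facG. rewrite Rsh_code, skipn_all2 by auto. apply seln_0. Qed.

Lemma facG_in j u x : (j <= length u)%nat ->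
  facG j (code_sit (u ++ [x])) = G (code_sit (firstn j u)) (bv (nth j (u ++ [x]) false)).
Proof.
  intro H. unfold facG. rewrite Rsh_code, Pre_code, firstn_app_le by auto.
  rewrite (skipn_nth (u ++ [x]) j) by (rewrite length_app; simpl; lia).
  rewrite seln_code, bitn_code. reflexivity.
Qed.

Lemma ProdP_stable u : forall j, (length u <= j)%nat -> ProdP j (code_sit u) = ProdP (length u) (code_sit u).
Proof.
  intros j H. induction H. reflexivity. simpl. rewrite facG_out by lia. lia.
Qed.

Lemma ProdF_code u : ProdF (code_sit u) = ProdP (length u) (code_sit u).
Proof. apply ProdP_stable, length_le_code. Qed.

Lemma ProdP_prefix s x : forall j, (j <= length s)%nat -> ProdP j (code_sit (s ++ [x])) = ProdP j (code_sit s).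
Proof.
  induction j; intro H. reflexivity. simpl. rewrite IHj by lia. f_equal.
  rewrite facG_in by lia. unfold facG. rewrite Rsh_code, Pre_code.
  rewrite (skipn_nth s j) by lia. rewrite seln_code, bitn_code.
  rewrite app_nth1 by lia. reflexivity.
Qed.

Lemma ProdF_snoc s x : ProdF (code_sit (s ++ [x])) = (ProdF (code_sit s) * G (code_sit s) (bv x))%nat.
Proof.
  rewrite !ProdF_code. rewrite length_app. simpl length. rewrite Nat.add_1_r. simpl ProdP.
  rewrite ProdP_prefix by lia. f_equal.
  rewrite facG_in by lia. rewrite firstn_all. rewrite nth_middle || (rewrite app_nth2, Nat.sub_diag by lia; reflexivity).
  reflexivity.
Qed.

Lemma ProdF_nil : ProdF (code_sit []) = 1%nat.
Proof. reflexivity. Qed.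
End Prod.

Definition c_facG cG := CComp c_sel [c_R; CComp cG [c_P; CComp c_bit [c_R]]; c_one].
Lemma is_facG cG G : is2 cG G -> is2 (c_facG cG) (facG G).
Proof.
  intro HG. eapply c_ext. apply u3. apply is_sel. apply is_R.
  apply u2. apply HG. apply is_P. apply u1. apply is_bit. apply is_R. apply c_cst.
  arith_goal.
Qed.

Definition c_ProdP cG := CPrec c_one (CComp c_mul [CProj 1; CComp (c_facG cG) [CProj 0; CProj 2]]).
Lemma is_ProdP cG G : is2 cG G -> is2 (c_ProdP cG) (ProdP G).
Proof.
  intro HG. eapply prec2 with (base := fun _ => 1%nat) (step := fun j r n => (r * facG G j n)%nat).
  apply c_cst. eapply c_ext. apply u2. apply is_mul. apply pj; lia.
  apply u2. apply is_facG, HG. apply pj; lia. apply pj; lia. arith_goal.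
  reflexivity. reflexivity.
Qed.

Definition c_ProdF cG := CComp (c_ProdP cG) [CProj 0; CProj 0].
Lemma is_ProdF cG G : is2 cG G -> is1 (c_ProdF cG) (ProdF G).
Proof.
  intro HG. eapply c_ext. apply u2. apply is_ProdP, HG. apply pj; lia. apply pj; lia. arith_goal.
Qed.

Section Factors.
Variables J M : nat.
Variable dn : nat -> nat.
Definition numG (d b : nat) := seln (dn d) (seln b (J+2) (M-J-2)) (seln b (J-2) (M-J+2)).
Definition denG (d b : nat) := seln (dn d) (seln b (J+1) (M-J-1)) (seln b (J-1) (M-J+1)).
Definition c_selG cd a b c e :=
  CComp c_sel [CComp cd [CProj 0]; CComp c_sel [CProj 1; cst a; cst b]; CComp c_sel [CProj 1; cst c; cst e]].
Lemma is_selG cd a b c e : is1 cd dn ->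
  is2 (c_selG cd a b c e) (fun d x => seln (dn d) (seln x a b) (seln x c e)).
Proof.
  intro Hd. eapply c_ext. apply u3. apply is_sel. apply u1. apply Hd. apply pj; lia.
  apply u3. apply is_sel. apply pj; lia. apply c_cst. apply c_cst.
  apply u3. apply is_sel. apply pj; lia. apply c_cst. apply c_cst. arith_goal.
Qed.
End Factors.

Definition enc_list (e : code -> nat) (l : list code) : nat :=
  fold_right (fun g acc => S (Cantor.to_nat (e g, acc))) 0%nat l.

Fixpoint enc_code (c : code) : nat :=
  match c with
  | CZero => Cantor.to_nat (0, 0)%nat
  | CSucc => Cantor.to_nat (1, 0)%nat
  | CProj i => Cantor.to_nat (2, i)%nat
  | CComp f gs => Cantor.to_nat (3, Cantor.to_nat (enc_code f, enc_list enc_code gs))%nat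
  | CPrec f g => Cantor.to_nat (4, Cantor.to_nat (enc_code f, enc_code g))%nat
  | CMu f => Cantor.to_nat (5, enc_code f)%nat
  end.

Lemma to_nat_inj p p' : Cantor.to_nat p = Cantor.to_nat p' -> p = p'.
Proof. intro H. rewrite <- (Cantor.cancel_of_to p), <- (Cantor.cancel_of_to p'), H. reflexivity. Qed.

Lemma enc_code_inj : forall c c', enc_code c = enc_code c' -> c = c'.
Proof.
  intro c; induction c using code_ind'; intros [| |i'|f' gs'|f' g'|f'] E; cbn -[Cantor.to_nat] in E;
    apply to_nat_inj in E; try discriminate; auto.
  - apply pair_equal_spec in E as [_ E]; subst; auto.
  - apply pair_equal_spec in E as [_ E]. apply to_nat_inj in E. apply pair_equal_spec in E as [E1 E2]. f_equal; auto.
    clear -H E2. revert gs' E2. induction H; intros [|g' gs'] E; cbn -[Cantor.to_nat] in E; try discriminate; auto.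
    apply Nat.succ_inj in E. apply to_nat_inj in E. apply pair_equal_spec in E as [E1 E2]. f_equal; auto.
  - apply pair_equal_spec in E as [_ E]. apply to_nat_inj in E. apply pair_equal_spec in E as [E1 E2]. f_equal; auto.
  - apply pair_equal_spec in E as [_ E]. f_equal; auto.
Qed.

Definition code3 := (code * code * code)%type.
Definition enc3 (c : code3) : nat :=
  let '(a, b, d) := c in Cantor.to_nat (enc_code a, Cantor.to_nat (enc_code b, enc_code d)).
Lemma enc3_inj c c' : enc3 c = enc3 c' -> c = c'.
Proof.
  destruct c as [[a b] d], c' as [[a' b'] d']; cbn -[Cantor.to_nat]; intro E.
  apply to_nat_inj in E. apply pair_equal_spec in E as [E1 E2]. apply to_nat_inj in E2. apply pair_equal_spec in E2 as [E2 E3].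
  apply enc_code_inj in E1, E2, E3. subst; auto.
Qed.

Definition RepC (c : code3) (k : nat) (qf : list nat -> R) : Prop :=
  let '(ca, cb, cd) := c in
  exists a b d, computes ca k a /\ computes cb k b /\ computes cd k d /\
    forall v, length v = k -> qf v = (INR (a v) - INR (b v)) / (INR (d v) + 1).

Lemma computes_uniq c k f f' : computes c k f -> computes c k f' -> forall v, length v = k -> f v = f' v.
Proof. intros H H' v L. eapply eval_det; eauto. Qed.

Lemma RepC_uniq c k q q' : RepC c k q -> RepC c k q' -> forall v, length v = k -> q v = q' v.
Proof.
  destruct c as [[ca cb] cd]; simpl.
  intros (a & b & d & Ha & Hb & Hd & Hq) (a' & b' & d' & Ha' & Hb' & Hd' & Hq') v L.
  rewrite Hq, Hq' by auto.
  rewrite (computes_uniq _ _ _ _ Ha Ha' v L), (computes_uniq _ _ _ _ Hb Hb' v L), (computes_uniq _ _ _ _ Hd Hd' v L).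
  reflexivity.
Qed.

Lemma rat_rec_RepC k q : rat_recursive k q -> exists c, RepC c k q.
Proof.
  intros (a & b & d & [ca Ha] & [cb Hb] & [cd Hd] & Hq). exists (ca, cb, cd). simpl.
  exists a, b, d. repeat split; auto.
Qed.

Definition Rep (Rt : rtype) (c : code3) (T : process) : Prop :=
  match Rt with
  | Cr | Sr => exists q, RepC c 1 q /\ forall s, T s = q (enc_S s)
  | ML => exists q, RepC c 2 q /\ forall s, Un_cv (fun n => q (enc_S s ++ [n])) (T s)
  | wML => exists D q, RepC c 3 q /\
      (forall d, Un_cv (fun n => q (enc_SB d ++ [n])) (D (fst d) (snd d))) /\ generated_by D T
  end.

Lemma Rep_uniq Rt c T T' : Rep Rt c T -> Rep Rt c T' -> T = T'.
Proof.
  intros H H'. apply functional_extensionality. intro s.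
  destruct Rt; simpl in H, H'.
  - destruct H as (q & Hc & Hl), H' as (q' & Hc' & Hl').
    eapply UL_sequence. apply Hl. eapply Un_cv_ext. 2: apply Hl'.
    intro n. apply (RepC_uniq _ _ _ _ Hc' Hc). reflexivity.
  - destruct H as (D & q & Hc & Hl & G1 & G2), H' as (D' & q' & Hc' & Hl' & G1' & G2').
    assert (ED : forall s x, D s x = D' s x).
    { intros s0 x. eapply UL_sequence. apply (Hl (s0, x)). eapply Un_cv_ext. 2: apply (Hl' (s0, x)).
      intro n. apply (RepC_uniq _ _ _ _ Hc' Hc). reflexivity. }
    induction s as [|x s IH] using rev_ind. congruence. rewrite G2, G2', IH, ED. reflexivity.
  - destruct H as (q & Hc & E), H' as (q' & Hc' & E'). rewrite E, E'. apply (RepC_uniq _ _ _ _ Hc Hc'). reflexivity.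
  - destruct H as (q & Hc & E), H' as (q' & Hc' & E'). rewrite E, E'. apply (RepC_uniq _ _ _ _ Hc Hc'). reflexivity.
Qed.

Lemma class_Rep Rt T : test_class Rt T -> exists c, Rep Rt c T.
Proof.
  destruct Rt; simpl.
  - intros [_ (q & Hq & Hl)]. destruct (rat_rec_RepC _ _ Hq) as [c Hc]. exists c, q. split; auto.
    intro s. apply Hl.
  - intros (D & _ & (q & Hq & Hl) & G). destruct (rat_rec_RepC _ _ Hq) as [c Hc].
    exists c, D, q. repeat split; auto; try apply Hl; apply G.
  - intros (_ & _ & q & Hq & E). destruct (rat_rec_RepC _ _ Hq) as [c Hc]. exists c, q; auto.
  - intros (_ & _ & q & Hq & E). destruct (rat_rec_RepC _ _ Hq) as [c Hc]. exists c, q; auto.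
Qed.

Section Fam.
Variable Rt : rtype.
Variable P : process -> Prop.
Hypothesis HP : forall T, P T -> test_class Rt T.
Definition QF (i : nat) (T : process) := P T /\ exists c, enc3 c = i /\ Rep Rt c T.
Definition Fam (i : nat) : process :=
  match excluded_middle_informative (exists T, QF i T) with
  | left H => proj1_sig (constructive_indefinite_description _ H)
  | right _ => fun _ => 1
  end.

Lemma Fam_prop i : P (Fam i) \/ Fam i = (fun _ => 1).
Proof.
  unfold Fam. destruct excluded_middle_informative as [H|H]; auto.
  left. exact (proj1 (proj2_sig (constructive_indefinite_description _ H))).
Qed.

Lemma Fam_cover T : P T -> exists i, Fam i = T.
Proof.
  intro H. destruct (class_Rep _ _ (HP _ H)) as [c Hc]. exists (enc3 c).
  unfold Fam. destruct excluded_middle_informative as [H'|H'].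
  - destruct (proj2 (proj2_sig (constructive_indefinite_description _ H'))) as (c' & E & Hc').
    apply enc3_inj in E. subst. eapply Rep_uniq; eauto.
  - exfalso. apply H'. exists T. split; auto. exists c; auto.
Qed.
End Fam.

Definition superm (r : sit -> R) (F : process) : Prop :=
  forall s, E_r (r s) (fun x => F (s ++ [x]) - F s) <= 0.

Lemma superm_ineq r F s : superm r F -> r s * F (s ++ [true]) + (1 - r s) * F (s ++ [false]) <= F s.
Proof. intro H. specialize (H s). unfold E_r in H. lra. Qed.

Section Greedy.
Variable r : sit -> R.
Variable c : R.
Hypothesis c_pos : 0 < c.
Hypothesis r_bnd : forall s, c <= r s <= 1 - c.
Variable F : nat -> process.
Hypothesis F_nn : forall i s, 0 <= F i s.
Hypothesis F_root : forall i, F i [] = 1.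
Hypothesis F_sm : forall i, superm r (F i).
Variable U : process.
Hypothesis U_nn : forall s, 0 <= U s.
Hypothesis U_root : U [] = 1.
Hypothesis U_sm : superm r U.

Lemma F_bound i s : F i s <= (/ c) ^ length s.
Proof.
  induction s as [|x s IH] using rev_ind. rewrite F_root. simpl; lra.
  rewrite length_app. simpl length. rewrite Nat.add_1_r. simpl pow.
  pose proof (superm_ineq _ _ s (F_sm i)) as H. pose proof (r_bnd s).
  pose proof (F_nn i (s ++ [true])). pose proof (F_nn i (s ++ [false])).
  assert (F i (s ++ [x]) * c <= F i s).
  { destruct x.
    - apply Rle_trans with (F i (s ++ [true]) * r s). apply Rmult_le_compat_l; lra. nra.
    - apply Rle_trans with (F i (s ++ [false]) * (1 - r s)). apply Rmult_le_compat_l; lra. nra. }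
  assert (0 < / c) by (apply Rinv_0_lt_compat; auto).
  apply Rle_trans with (/ c * F i s). 
  - replace (F i (s ++ [x])) with (/ c * (F i (s ++ [x]) * c)) by (field; lra).
    apply Rmult_le_compat_l; lra.
  - apply Rmult_le_compat_l; lra.
Qed.

Definition wt (i : nat) := (/ 2) ^ (S i).
Lemma wt_pos i : 0 < wt i.
Proof. unfold wt. apply pow_lt. lra. Qed.

Lemma ex_wt K : ex_series (fun i => K * wt i).
Proof.
  unfold wt. eapply ex_series_ext with (a := fun i => scal (K / 2) ((/2) ^ i)).
  intro n. simpl. unfold scal; simpl; unfold mult; simpl. field.
  apply (@ex_series_scal_l R_AbsRing R_NormedModule). apply ex_series_geom. rewrite Rabs_pos_eq; lra.
Qed.

Lemma Series_wt : Series wt = 1.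
Proof.
  apply is_series_unique.
  eapply is_series_ext with (a := fun n => scal (/2) ((/2)^n)).
  intro n. reflexivity.
  replace 1 with (scal (/2) (/(1 - /2))) by (unfold scal; simpl; unfold mult; simpl; field).
  apply (@is_series_scal_l R_AbsRing R_NormedModule). apply is_series_geom. rewrite Rabs_pos_eq; lra.
Qed.

Definition Z (s : sit) := Series (fun i => wt i * F i s).

Lemma ex_Z s : ex_series (fun i => wt i * F i s).
Proof.
  apply (@ex_series_le R_AbsRing R_CompleteNormedModule) with (b := fun i => (/ c) ^ length s * wt i).
  intro n. unfold norm; simpl. unfold abs; simpl. pose proof (wt_pos n). pose proof (F_nn n s).
  rewrite Rabs_pos_eq by nra. rewrite Rmult_comm. apply Rmult_le_compat_r. lra. apply F_bound.
  apply ex_wt.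
Qed.

Lemma Z_nn s : 0 <= Z s.
Proof.
  unfold Z. apply Rle_trans with (Series (fun _ => 0)).
  right. transitivity (0 * Series wt). ring. rewrite <- Series_scal_l. apply Series_ext. intro; ring.
  apply Series_le. intro n. pose proof (wt_pos n). pose proof (F_nn n s). nra. apply ex_Z.
Qed.

Lemma Z_root : Z [] = 1.
Proof. unfold Z. rewrite <- Series_wt. apply Series_ext. intro n. rewrite F_root. ring. Qed.

Lemma Z_sm : superm r Z.
Proof.
  intro s. unfold E_r.
  cut (r s * Z (s ++ [true]) + (1 - r s) * Z (s ++ [false]) <= Z s). lra.
  unfold Z. rewrite <- !Series_scal_l. rewrite <- Series_plus.
  2: apply ex_series_ext with (a := fun i => scal (r s) (wt i * F i (s ++ [true]))); [reflexivity|apply (@ex_series_scal_l R_AbsRing R_NormedModule), ex_Z].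
  2: apply ex_series_ext with (a := fun i => scal (1 - r s) (wt i * F i (s ++ [false]))); [reflexivity|apply (@ex_series_scal_l R_AbsRing R_NormedModule), ex_Z].
  apply Series_le. 2: apply ex_Z.
  intro n. pose proof (wt_pos n). pose proof (r_bnd s). pose proof (F_nn n (s ++ [true])). pose proof (F_nn n (s ++ [false])).
  pose proof (superm_ineq _ _ s (F_sm n)). split.
  apply Rplus_le_le_0_compat; apply Rmult_le_pos; try lra; apply Rmult_le_pos; lra.
  replace (r s * (wt n * F n (s ++ [true])) + (1 - r s) * (wt n * F n (s ++ [false]))) with
    (wt n * (r s * F n (s ++ [true]) + (1 - r s) * F n (s ++ [false]))) by ring.
  apply Rmult_le_compat_l; lra.
Qed.

Lemma nonneg_term_le_Series (a : nat -> R) i : (forall n, 0 <= a n) -> ex_series a -> a i <= Series a.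
Proof.
  intros Hp He. apply Series_correct in He.
  assert (Hl : is_lim_seq (sum_n a) (Series a)) by exact He.
  apply Rle_trans with (sum_n a i).
  - rewrite sum_n_Reals. destruct i. simpl. lra. simpl. pose proof (cond_pos_sum a i Hp). lra.
  - apply is_lim_seq_incr_compare with (u := sum_n a); auto.
    intro n. rewrite sum_Sn. unfold plus; simpl. pose proof (Hp (S n)). lra.
Qed.

Lemma term_le_Z i s : wt i * F i s <= Z s.
Proof.
  unfold Z. apply (nonneg_term_le_Series (fun i => wt i * F i s)). 2: apply ex_Z.
  intro n. pose proof (wt_pos n). pose proof (F_nn n s). nra.
Qed.

Definition V (s : sit) := Z s + U s.
Definition choose (s : sit) : bool := if Rle_dec (V (s ++ [true])) (V s) then true else false.
Fixpoint pth (n : nat) : sit := match n with 0%nat => [] | S n' => pth n' ++ [choose (pth n')] end.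
Definition gpath (k : nat) : bool := choose (pth k).

Lemma prefix_gpath n : prefix gpath n = pth n.
Proof.
  induction n. reflexivity. unfold prefix in *. rewrite seq_S, map_app, IHn. reflexivity.
Qed.

Lemma V_step s : V (s ++ [choose s]) <= V s.
Proof.
  unfold choose. destruct Rle_dec as [H|H]. auto.
  assert (superm r V) as HV.
  { intro s'. pose proof (Z_sm s'). pose proof (U_sm s'). unfold E_r, V in *. lra. }
  pose proof (superm_ineq _ _ s HV). pose proof (r_bnd s).
  apply Rnot_le_lt in H. nra.
Qed.

Lemma V_pth n : V (pth n) <= 2.
Proof.
  induction n. simpl. unfold V. rewrite Z_root, U_root. lra.
  simpl. eapply Rle_trans. apply V_step. auto.
Qed.

Lemma greedy_U n : U (prefix gpath n) <= 2.
Proof. rewrite prefix_gpath. pose proof (V_pth n). pose proof (Z_nn (pth n)). unfold V in *. lra. Qed.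

Lemma greedy_F i : exists B, forall n, F i (prefix gpath n) <= B.
Proof.
  exists (2 / wt i). intro n. rewrite prefix_gpath. pose proof (V_pth n). pose proof (U_nn (pth n)).
  pose proof (term_le_Z i (pth n)). pose proof (wt_pos i). unfold V in *.
  apply Rmult_le_reg_l with (wt i). auto. unfold Rdiv. rewrite (Rmult_comm 2), <- Rmult_assoc, Rinv_r; lra.
Qed.
End Greedy.

Lemma div_le_ x y z : 0 < y -> x <= z * y -> x / y <= z.
Proof. intros Hy H. apply Rmult_le_reg_r with y; auto. unfold Rdiv. rewrite Rmult_assoc, Rinv_l; lra. Qed.
Lemma fair_ineq a b f : 2 <= a -> 1 <= b -> 0 <= f -> f * (a+b) <= a - 1 -> f*(a/(a-1)) + (1-f)*(b/(b+1)) <= 1.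
Proof.
intros Ha Hb Hf H.
replace (f*(a/(a-1)) + (1-f)*(b/(b+1))) with ((f*a*(b+1) + (1-f)*b*(a-1))/((a-1)*(b+1))) by (field; lra).
apply div_le_. nra. nra.
Qed.
Lemma U_ineq a b : 2 <= a -> 2 <= b -> (a+1)/(a+b) * ((a-1)/a) + (b-1)/(a+b) * ((b+1)/b) <= 1 - 4/((a+b)*(a+b)).
Proof.
intros Ha Hb.
replace ((a+1)/(a+b) * ((a-1)/a) + (b-1)/(a+b) * ((b+1)/b)) with (((a*a-1)*b + (b*b-1)*a)/(a*b*(a+b))) by (field; lra).
replace (1 - 4/((a+b)*(a+b))) with (((a+b)*(a+b) - 4)/((a+b)*(a+b))) by (field; lra).
apply div_le_. apply Rmult_lt_0_compat; nra.
unfold Rdiv. 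
replace (((a + b) * (a + b) - 4) * / ((a + b) * (a + b)) * (a * b * (a + b))) with (((a + b) * (a + b) - 4) * (a*b) * / (a+b)) by (field; lra).
assert (0 < / (a+b)) by (apply Rinv_0_lt_compat; lra).
assert ((a * a - 1) * b + (b * b - 1) * a = ((a*a-1)*b + (b*b-1)*a) * (a+b) * / (a+b)) by (field; lra).
rewrite H0. apply Rmult_le_compat_r. lra.
replace (((a * a - 1) * b + (b * b - 1) * a) * (a + b)) with (a*b*((a+b)*(a+b)) - (a+b)*(a+b)) by ring.
replace (((a + b) * (a + b) - 4) * (a * b)) with (a*b*((a+b)*(a+b)) - 4*(a*b)) by ring.
pose proof (Rle_0_sqr (a-b)) as Hs; unfold Rsqr in Hs. assert ((a+b)*(a+b) - 4*(a*b) = (a-b)*(a-b)) by ring. lra.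
Qed.

Lemma seln_cases c x y : seln c x y = x \/ seln c x y = y.
Proof. destruct c. rewrite seln_0; auto. rewrite seln_S; auto. Qed.

Lemma ProdF_pos G : (forall d b, (1 <= G d b)%nat) -> forall s, (1 <= ProdF G (code_sit s))%nat.
Proof.
  intros HG s. induction s as [|x s IH] using rev_ind. rewrite ProdF_nil; lia.
  rewrite ProdF_snoc. specialize (HG (code_sit s) (bv x)). nia.
Qed.

Lemma bern2 h n : 0 <= h -> 1 + INR n * h + INR n * (INR n - 1) / 2 * (h * h) <= (1 + h) ^ n.
Proof.
  intro Hh. induction n. simpl. lra.
  rewrite S_INR. simpl pow.
  assert (0 <= INR n) by apply pos_INR.
  assert (0 <= INR n * (INR n - 1) / 2 * (h*h*h) ) .
  { destruct n. simpl. lra. rewrite S_INR. assert (0 <= INR n) by apply pos_INR.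
    unfold Rdiv. apply Rmult_le_pos. apply Rmult_le_pos. nra. lra. apply Rmult_le_pos; nra. }
  assert (E : (1 + h) * (1 + INR n * h + INR n * (INR n - 1) / 2 * (h * h)) =
    1 + (INR n + 1) * h + (INR n + 1) * (INR n + 1 - 1) / 2 * (h * h) + INR n * (INR n - 1) / 2 * (h*h*h)) by field.
  apply Rle_trans with ((1 + h) * (1 + INR n * h + INR n * (INR n - 1) / 2 * (h * h))).
  rewrite E. lra. apply Rmult_le_compat_l; lra.
Qed.

Lemma growth_lin g : 1 < g -> forall Mx N, exists n, (N <= n)%nat /\ Mx < g ^ n / 2 - INR n.
Proof.
  intros Hg Mx N. set (h := g - 1). assert (Hh : 0 < h) by (unfold h; lra).
  destruct (INR_unbounded (2 + 4 * (Rabs Mx + 2) / (h * h))) as [K HK].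
  exists (Nat.max N K). split. lia.
  set (n := Nat.max N K). assert (Hn : INR K <= INR n) by (apply le_INR; lia).
  pose proof (bern2 h n (Rlt_le _ _ Hh)) as B. replace (1 + h) with g in B by (unfold h; ring).
  assert (Hq : 4 * (Rabs Mx + 2) / (h * h) * (h * h) = 4 * (Rabs Mx + 2)) by (field; lra).
  assert (Hn1 : INR n - 1 >= 4 * (Rabs Mx + 2) / (h * h)) by lra.
  assert (Hx : (INR n - 1) * (h * h) >= 4 * (Rabs Mx + 2)).
  { rewrite <- Hq. apply Rle_ge. apply Rmult_le_compat_r. nra. lra. }
  assert (0 <= INR n * h) by (apply Rmult_le_pos; [apply pos_INR|lra]).
  pose proof (Rabs_pos Mx). pose proof (Rle_abs Mx).
  assert (INR n * ((INR n - 1) * (h * h)) >= INR n * (4 * (Rabs Mx + 2))) by (apply Rle_ge, Rmult_le_compat_l; [apply pos_INR|lra]).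
  assert (0 <= 4 * (Rabs Mx + 2) / (h * h)) by (unfold Rdiv; apply Rmult_le_pos; [lra| left; apply Rinv_0_lt_compat; nra]).
  assert (INR n >= 1) by lra.
  assert (INR n * (INR n - 1) / 2 * (h * h) = INR n * ((INR n - 1) * (h * h)) / 2) by (field).
  nra.
Qed.

Lemma Un_cv_const (a : R) : Un_cv (fun _ => a) a.
Proof. intros eps He. exists 0%nat. intros. unfold R_dist. rewrite Rminus_diag, Rabs_R0. auto. Qed.

Lemma seln_P (P : nat -> Prop) c x y : P x -> P y -> P (seln c x y).
Proof. intros. destruct (seln_cases c x y) as [E|E]; rewrite E; auto. Qed.

Lemma ProdP_pos_all G : (forall d b, (1 <= G d b)%nat) -> forall j n, (1 <= ProdP G j n)%nat.
Proof.
  intros HG j n. induction j. simpl. lia. simpl. assert (1 <= facG G j n)%nat.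
  { unfold facG. apply seln_P; auto. }
  nia.
Qed.

Section Main.
Variables J M : nat.
Hypothesis HJ : (4 <= J)%nat.
Hypothesis HM : (J + 4 <= M)%nat.
Variable dn : nat -> nat.
Variable cd : code.
Hypothesis Hcd : is1 cd dn.

Definition nG := numG J M dn.
Definition dG := denG J M dn.
Definition NumT (n : nat) := ProdF nG n.
Definition DenT (n : nat) := ProdF dG n.
Definition Tphi (s : sit) := INR (NumT (code_sit s)) / INR (DenT (code_sit s)).
Definition tf (s : sit) (x : bool) := INR (nG (code_sit s) (bv x)) / INR (dG (code_sit s) (bv x)).


Lemma nG_pos d b : (1 <= nG d b)%nat.
Proof. unfold nG, numG. repeat apply seln_P; lia. Qed.
Lemma dG_pos d b : (1 <= dG d b)%nat.
Proof. unfold dG, denG. repeat apply seln_P; lia. Qed.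

Lemma NumT_pos s : 0 < INR (NumT (code_sit s)).
Proof. apply lt_0_INR. pose proof (ProdF_pos nG nG_pos s). unfold NumT. lia. Qed.
Lemma DenT_pos s : 0 < INR (DenT (code_sit s)).
Proof. apply lt_0_INR. pose proof (ProdF_pos dG dG_pos s). unfold DenT. lia. Qed.

Lemma Tphi_pos s : 0 < Tphi s.
Proof. unfold Tphi. apply Rdiv_lt_0_compat; [apply NumT_pos|apply DenT_pos]. Qed.
Lemma Tphi_nil : Tphi [] = 1.
Proof. unfold Tphi, NumT, DenT. rewrite !ProdF_nil. simpl. field. Qed.

Lemma Tphi_snoc s x : Tphi (s ++ [x]) = Tphi s * tf s x.
Proof.
  unfold Tphi, tf, NumT, DenT. rewrite !ProdF_snoc, !mult_INR.
  pose proof (DenT_pos s). unfold DenT in H.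
  assert (0 < INR (dG (code_sit s) (bv x))) by (apply lt_0_INR; pose proof (dG_pos (code_sit s) (bv x)); lia).
  field. lra.
Qed.

Lemma INR_sub a b : (b <= a)%nat -> INR (a - b) = INR a - INR b.
Proof. apply minus_INR. Qed.

Lemma tf_dec1 s : dn (code_sit s) <> 0%nat ->
  tf s true = (INR J + 2) / (INR J + 1) /\ tf s false = (INR M - INR J - 2) / (INR M - INR J - 1).
Proof.
  intro H. unfold tf, nG, dG, numG, denG. destruct (dn (code_sit s)) as [|k]. lia.
  simpl bv. rewrite ?seln_S, ?seln_0.
  rewrite !INR_sub by lia. rewrite !plus_INR. simpl INR. split; f_equal; ring.
Qed.

Lemma tf_dec0 s : dn (code_sit s) = 0%nat ->
  tf s true = (INR J - 2) / (INR J - 1) /\ tf s false = (INR M - INR J + 2) / (INR M - INR J + 1).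
Proof.
  intro H. unfold tf, nG, dG, numG, denG. rewrite H. simpl bv. rewrite ?seln_0, ?seln_S, ?seln_0.
  rewrite !plus_INR, !INR_sub by lia. simpl INR. split; f_equal; ring.
Qed.

Lemma J_ge : 4 <= INR J.
Proof. apply le_INR in HJ. simpl in HJ. lra. Qed.
Lemma M_ge : INR J + 4 <= INR M.
Proof. apply le_INR in HM. rewrite plus_INR in HM. simpl in HM. lra. Qed.

Lemma Tphi_fair s f : 0 <= f <= 1 ->
  (dn (code_sit s) <> 0%nat -> f <= (INR J + 1) / INR M) ->
  (dn (code_sit s) = 0%nat -> (INR J - 1) / INR M <= f) ->
  E_r f (fun x => Tphi (s ++ [x]) - Tphi s) <= 0.
Proof.
  intros Hf H1 H0. pose proof J_ge as HJr. pose proof M_ge as HMr. unfold E_r. rewrite !Tphi_snoc.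
  pose proof (Tphi_pos s).
  cut (f * tf s true + (1 - f) * tf s false <= 1).
  { intro C. replace (f * (Tphi s * tf s true - Tphi s) + (1 - f) * (Tphi s * tf s false - Tphi s))
      with (Tphi s * (f * tf s true + (1 - f) * tf s false - 1)) by ring.
    assert (f * tf s true + (1 - f) * tf s false - 1 <= 0) by lra. nra. }
  assert (HM0 : 0 < INR M) by lra.
  destruct (Nat.eq_dec (dn (code_sit s)) 0) as [E|E].
  - destruct (tf_dec0 s E) as [T1 T0]. rewrite T1, T0. specialize (H0 E).
    assert (Hfm : f * INR M >= INR J - 1).
    { unfold Rdiv in H0. apply Rmult_le_compat_r with (r := INR M) in H0; [|lra].
      rewrite Rmult_assoc, Rinv_l in H0; lra. }
    pose proof (fair_ineq (INR M - INR J + 2) (INR J - 2) (1 - f)) as Fi.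
    replace (INR M - INR J + 2 - 1) with (INR M - INR J + 1) in Fi by ring.
    replace (INR J - 2 + 1) with (INR J - 1) in Fi by ring.
    replace (1 - (1 - f)) with f in Fi by ring.
    assert (Hc : (1 - f) * (INR M - INR J + 2 + (INR J - 2)) <= INR M - INR J + 1).
    { replace (INR M - INR J + 2 + (INR J - 2)) with (INR M) by ring. lra. }
    specialize (Fi ltac:(lra) ltac:(lra) ltac:(lra) Hc). lra.
  - destruct (tf_dec1 s E) as [T1 T0]. rewrite T1, T0. specialize (H1 E).
    assert (Hfm : f * INR M <= INR J + 1).
    { unfold Rdiv in H1. apply Rmult_le_compat_r with (r := INR M) in H1; [|lra].
      rewrite Rmult_assoc, Rinv_l in H1; lra. }
    pose proof (fair_ineq (INR J + 2) (INR M - INR J - 2) f) as Fi.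
    replace (INR J + 2 - 1) with (INR J + 1) in Fi by ring.
    replace (INR M - INR J - 2 + 1) with (INR M - INR J - 1) in Fi by ring.
    assert (Hc : f * (INR J + 2 + (INR M - INR J - 2)) <= INR J + 1).
    { replace (INR J + 2 + (INR M - INR J - 2)) with (INR M) by ring. lra. }
    apply Fi; lra.
Qed.

Definition rr (s : sit) : R := if Nat.eqb (dn (code_sit s)) 0 then (INR J - 3) / INR M else (INR J + 3) / INR M.
Definition gg : R := / (1 - 4 / (INR M * INR M)).
Definition Uproc (s : sit) : R := gg ^ length s * / Tphi s.

Lemma M8 : 8 <= INR M.
Proof. pose proof J_ge; pose proof M_ge; lra. Qed.

Lemma eps_bnd : 0 < 1 - 4 / (INR M * INR M) < 1.
Proof.
  pose proof M8. assert (0 < 4 / (INR M * INR M)) by (apply Rdiv_lt_0_compat; nra).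
  assert (4 / (INR M * INR M) <= 4 / 64).
  { unfold Rdiv. apply Rmult_le_compat_l. lra. apply Rinv_le_contravar; nra. }
  lra.
Qed.

Lemma gg_gt1 : 1 < gg.
Proof. unfold gg. pose proof eps_bnd. rewrite <- Rinv_1. apply Rinv_lt_contravar; lra. Qed.

Lemma frac_bnd a m : 0 < m -> 1 <= a <= m - 1 -> / m <= a / m <= 1 - / m.
Proof.
  intros Hm Ha. assert (0 < / m) by (apply Rinv_0_lt_compat; auto). split; unfold Rdiv.
  - rewrite <- (Rmult_1_l (/ m)) at 1. apply Rmult_le_compat_r; lra.
  - replace (1 - / m) with ((m - 1) * / m) by (field; lra). apply Rmult_le_compat_r; lra.
Qed.

Lemma rr_bnd s : / INR M <= rr s <= 1 - / INR M.
Proof.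
  pose proof J_ge. pose proof M_ge. assert (0 < INR M) by lra.
  unfold rr. destruct (Nat.eqb _ _); apply frac_bnd; lra.
Qed.

Lemma tf_pos s x : 0 < tf s x.
Proof.
  unfold tf. apply Rdiv_lt_0_compat; apply lt_0_INR; [pose proof (nG_pos (code_sit s) (bv x)) | pose proof (dG_pos (code_sit s) (bv x))]; lia.
Qed.

Lemma Uproc_nil : Uproc [] = 1.
Proof. unfold Uproc. rewrite Tphi_nil. simpl. field. Qed.

Lemma Uproc_nn s : 0 <= Uproc s.
Proof. unfold Uproc. pose proof gg_gt1. pose proof (Tphi_pos s). apply Rmult_le_pos. apply pow_le; lra. left; apply Rinv_0_lt_compat; auto. Qed.

Lemma Uproc_sm : superm rr Uproc.
Proof.
  intro s. unfold E_r, Uproc. rewrite !Tphi_snoc, !length_app. simpl length. rewrite Nat.add_1_r. simpl pow.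
  pose proof (Tphi_pos s). pose proof (tf_pos s true). pose proof (tf_pos s false). pose proof gg_gt1.
  pose proof eps_bnd. pose proof J_ge. pose proof M_ge. assert (0 < INR M) by lra.
  set (G := gg ^ length s). assert (0 < G) by (apply pow_lt; lra).
  cut (rr s * / tf s true + (1 - rr s) * / tf s false <= 1 - 4 / (INR M * INR M)).
  { intro C. 
    replace (rr s * (gg * G * / (Tphi s * tf s true) - G * / Tphi s) + (1 - rr s) * (gg * G * / (Tphi s * tf s false) - G * / Tphi s))
      with (G * / Tphi s * (gg * (rr s * / tf s true + (1 - rr s) * / tf s false) - 1)) by (field; lra).
    assert (gg * (rr s * / tf s true + (1 - rr s) * / tf s false) <= 1).
    { unfold gg. apply Rmult_le_reg_l with (1 - 4 / (INR M * INR M)). lra.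
      rewrite <- Rmult_assoc, Rinv_r by lra. lra. }
    assert (0 < G * / Tphi s) by (apply Rmult_lt_0_compat; [auto | apply Rinv_0_lt_compat; auto]).
    nra. }
  unfold rr. destruct (Nat.eqb_spec (dn (code_sit s)) 0) as [E|E].
  - destruct (tf_dec0 s E) as [T1 T0]. rewrite T1, T0.
    pose proof (U_ineq (INR M - INR J + 2) (INR J - 2) ltac:(lra) ltac:(lra)) as Ui.
    replace (INR M - INR J + 2 + (INR J - 2)) with (INR M) in Ui by ring.
    rewrite !Rinv_div.
    replace ((INR J - 3) / INR M * ((INR J - 1) / (INR J - 2)) + (1 - (INR J - 3) / INR M) * ((INR M - INR J + 1) / (INR M - INR J + 2)))
      with ((INR M - INR J + 2 + 1) / INR M * ((INR M - INR J + 2 - 1) / (INR M - INR J + 2)) + (INR J - 2 - 1) / INR M * ((INR J - 2 + 1) / (INR J - 2))) by (field; lra).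
    exact Ui.
  - destruct (tf_dec1 s E) as [T1 T0]. rewrite T1, T0.
    pose proof (U_ineq (INR J + 2) (INR M - INR J - 2) ltac:(lra) ltac:(lra)) as Ui.
    replace (INR J + 2 + (INR M - INR J - 2)) with (INR M) in Ui by ring.
    rewrite !Rinv_div.
    replace ((INR J + 3) / INR M * ((INR J + 1) / (INR J + 2)) + (1 - (INR J + 3) / INR M) * ((INR M - INR J - 1) / (INR M - INR J - 2)))
      with ((INR J + 2 + 1) / INR M * ((INR J + 2 - 1) / (INR J + 2)) + (INR M - INR J - 2 - 1) / INR M * ((INR M - INR J - 2 + 1) / (INR M - INR J - 2))) by (field; lra).
    exact Ui.
Qed.

Lemma Tphi_growth s : Uproc s <= 2 -> gg ^ length s / 2 <= Tphi s.
Proof.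
  unfold Uproc. intro H. pose proof (Tphi_pos s).
  assert (gg ^ length s <= 2 * Tphi s).
  { apply Rmult_le_compat_r with (r := Tphi s) in H; [|lra]. rewrite Rmult_assoc, Rinv_l in H; lra. }
  lra.
Qed.

Definition cNum := c_ProdF (c_selG cd (J+2) (M-J-2) (J-2) (M-J+2)).
Definition cDen := c_ProdF (c_selG cd (J+1) (M-J-1) (J-1) (M-J+1)).
Lemma is_nG : is2 (c_selG cd (J+2) (M-J-2) (J-2) (M-J+2)) nG.
Proof. exact (is_selG _ _ _ _ _ _ Hcd). Qed.
Lemma is_dG : is2 (c_selG cd (J+1) (M-J-1) (J-1) (M-J+1)) dG.
Proof. exact (is_selG _ _ _ _ _ _ Hcd). Qed.
Lemma is_NumT : is1 cNum NumT.
Proof. apply is_ProdF, is_nG. Qed.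
Lemma is_DenT : is1 cDen DenT.
Proof. apply is_ProdF, is_dG. Qed.

Lemma DenT_ge1 n : (1 <= DenT n)%nat.
Proof. apply ProdP_pos_all, dG_pos. Qed.

Lemma frac_rat (a d : nat) : (1 <= d)%nat -> INR a / INR d = (INR a - INR 0) / (INR (d - 1) + 1).
Proof. intro H. rewrite INR_sub by auto. simpl INR. f_equal; ring. Qed.

Lemma rat_T1 : rat_recursive 1 (fun v => INR (NumT (nth 0 v 0%nat)) / INR (DenT (nth 0 v 0%nat))).
Proof.
  exists (fun v => NumT (nth 0 v 0%nat)), (fun _ => 0%nat), (fun v => (DenT (nth 0 v 0%nat) - 1)%nat).
  split; [|split; [|split]].
  - exists cNum. apply is_NumT.
  - exists CZero. apply c_zero.
  - exists (CComp c_sub [cDen; cst 1]). apply u2. apply is_sub. apply is_DenT. apply c_cst.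
  - intros v _. apply frac_rat, DenT_ge1.
Qed.

Lemma rat_T2 : rat_recursive 2 (fun v => INR (NumT (nth 0 v 0%nat)) / INR (DenT (nth 0 v 0%nat))).
Proof.
  exists (fun v => NumT (nth 0 v 0%nat)), (fun _ => 0%nat), (fun v => (DenT (nth 0 v 0%nat) - 1)%nat).
  split; [|split; [|split]].
  - exists (CComp cNum [CProj 0]). apply u1. apply is_NumT. apply pj; lia.
  - exists CZero. apply c_zero.
  - exists (CComp c_sub [CComp cDen [CProj 0]; cst 1]). apply u2. apply is_sub. apply u1. apply is_DenT. apply pj; lia. apply c_cst.
  - intros v _. apply frac_rat, DenT_ge1.
Qed.

Lemma rat_D3 : rat_recursive 3 (fun v => INR (nG (nth 0 v 0%nat) (nth 1 v 0%nat)) / INR (dG (nth 0 v 0%nat) (nth 1 v 0%nat))).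
Proof.
  exists (fun v => nG (nth 0 v 0%nat) (nth 1 v 0%nat)), (fun _ => 0%nat), (fun v => (dG (nth 0 v 0%nat) (nth 1 v 0%nat) - 1)%nat).
  split; [|split; [|split]].
  - exists (CComp (c_selG cd (J+2) (M-J-2) (J-2) (M-J+2)) [CProj 0; CProj 1]). apply u2. apply is_nG. apply pj; lia. apply pj; lia.
  - exists CZero. apply c_zero.
  - exists (CComp c_sub [CComp (c_selG cd (J+1) (M-J-1) (J-1) (M-J+1)) [CProj 0; CProj 1]; cst 1]).
    apply u2. apply is_sub. apply u2. apply is_dG. apply pj; lia. apply pj; lia. apply c_cst.
  - intros v _. apply frac_rat, dG_pos.
Qed.

Lemma Tphi_tp : test_process Tphi.
Proof. split. intro s. left. apply Tphi_pos. apply Tphi_nil. Qed.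

Lemma Tphi_class Rt : test_class Rt Tphi.
Proof.
  destruct Rt; simpl.
  - split. apply Tphi_tp. eexists. split. apply rat_T2. intro d. split. intro; apply Rle_refl. eapply Un_cv_ext; [|apply Un_cv_const]; intro; reflexivity.
  - exists tf. split. intros s x. left. apply tf_pos. split.
    + eexists. split. apply rat_D3. intros [s x]. split. intro; apply Rle_refl. eapply Un_cv_ext; [|apply Un_cv_const]; intro; reflexivity.
    + split. apply Tphi_nil. apply Tphi_snoc.
  - split. apply Tphi_tp. split. apply Tphi_pos. eexists. split. apply rat_T1. intro s. reflexivity.
  - split. apply Tphi_tp. split. apply Tphi_pos. eexists. split. apply rat_T1. intro s. reflexivity.
Qed.
End Main.

Lemma length_prefix w n : length (prefix w n) = n.
Proof. unfold prefix. rewrite length_map, length_seq. reflexivity. Qed.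

Lemma growth_mono (tau : nat -> R) : (forall n, tau n <= tau (S n)) -> forall n m, (n <= m)%nat -> tau n <= tau m.
Proof. intros H n m Hnm. induction Hnm. lra. eapply Rle_trans; eauto. Qed.

Lemma real_growth_INR : real_growth INR.
Proof.
  split; [|split; [|split]].
  - exists (fun v => INR (nth 0 v 0%nat)). split.
    + exists (fun v => nth 0 v 0%nat), (fun _ => 0%nat), (fun _ => 0%nat). split; [|split; [|split]].
      * exists (CProj 0). apply c_proj. lia.
      * exists CZero. apply c_zero.
      * exists CZero. apply c_zero.
      * intros v _. simpl INR. field.
    + intros d n. simpl. rewrite Rminus_diag, Rabs_R0. apply Rinv_0_lt_compat, pow_lt. lra.
  - intro n. apply pos_INR.
  - intro n. rewrite S_INR. lra.
  - intro Mx. destruct (INR_unbounded Mx) as [n Hn]. exists n. lra.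
Qed.

Section Contra.
Variables J M : nat.
Hypothesis HJ : (4 <= J)%nat.
Hypothesis HM : (J + 4 <= M)%nat.
Variable dn : nat -> nat.
Variable cd : code.
Hypothesis Hcd : is1 cd dn.
Variable Rt : rtype.
Variable phi : fsys.
Variables p q : R.
Hypothesis Hfs : forecasting_system phi.
Hypothesis Hpr : precise phi.
Hypothesis Hp : p <= (INR J - 3) / INR M.
Hypothesis Hq : (INR J + 3) / INR M <= q.
Hypothesis Hd1 : forall s, dn (code_sit s) <> 0%nat -> fst (phi s) <= (INR J + 1) / INR M.
Hypothesis Hd0 : forall s, dn (code_sit s) = 0%nat -> (INR J - 1) / INR M <= fst (phi s).
Hypothesis Heq : forall w, random Rt phi w <-> random Rt (stat p q) w.

Definition PP := test_supermartingale_in Rt (stat p q).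
Definition FF := Fam Rt PP.
Definition om := gpath FF (Uproc J M dn).

Lemma Mpos : 0 < INR M.
Proof. apply lt_0_INR. lia. Qed.

Lemma c_pos' : 0 < / INR M.
Proof. apply Rinv_0_lt_compat, Mpos. Qed.

Lemma rr_in s : p <= rr J M dn s <= q.
Proof.
  pose proof (J_ge J HJ). pose proof Mpos.
  assert ((INR J - 3) / INR M <= (INR J + 3) / INR M).
  { unfold Rdiv. apply Rmult_le_compat_r. left; apply Rinv_0_lt_compat; auto. lra. }
  unfold rr. destruct (Nat.eqb _ _); lra.
Qed.

Lemma FF_props : (forall i s, 0 <= FF i s) /\ (forall i, FF i [] = 1) /\ (forall i, superm (rr J M dn) (FF i)).
Proof.
  split; [|split]; intro i; destruct (Fam_prop Rt PP i) as [H|H]; unfold FF.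
  - intro s. destruct H as (_ & [H _] & _). apply H.
  - rewrite H. intros; lra.
  - destruct H as (_ & [_ H] & _). apply H.
  - rewrite H. reflexivity.
  - intro s. destruct H as (_ & _ & H). apply H. apply rr_in.
  - rewrite H. intro s. unfold E_r. lra.
Qed.

Lemma om_bounded T : PP T -> exists B, forall n, T (prefix om n) <= B.
Proof.
  intro HT. destruct (Fam_cover Rt PP (fun T H => proj1 H) T HT) as [i Ei].
  destruct FF_props as (A & B & C).
  destruct (greedy_F (rr J M dn) (/ INR M) c_pos' (rr_bnd J M HJ HM dn) FF A B C (Uproc J M dn)
    (Uproc_nn J M HJ HM dn) (Uproc_nil J M dn) (Uproc_sm J M HJ HM dn) i) as [Bd HB].
  exists Bd. intro n. rewrite <- Ei. apply HB.
Qed.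

Lemma om_growth n : gg M ^ n / 2 <= Tphi J M dn (prefix om n).
Proof.
  destruct FF_props as (A & B & C).
  pose proof (greedy_U (rr J M dn) (/ INR M) c_pos' (rr_bnd J M HJ HM dn) FF A B C (Uproc J M dn)
    (Uproc_nil J M dn) (Uproc_sm J M HJ HM dn) n) as H.
  pose proof (Tphi_growth J M HJ HM dn _ H). rewrite length_prefix in H0. exact H0.
Qed.

Lemma om_random : random Rt (stat p q) om.
Proof.
  destruct Rt eqn:ERt; unfold random.
  1-3: intros [T [HT HL]]; destruct (om_bounded T ltac:(unfold PP; rewrite ERt; exact HT)) as [B HB];
    assert (Hle : Rbar_le (LimSup_seq (fun n => T (prefix om n))) (LimSup_seq (fun _ => B)))
      by (apply LimSup_le; exists 0%nat; intros; apply HB);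
    rewrite HL, LimSup_seq_const in Hle; exact Hle.
  intros (T & tau & HT & Hg & HL). destruct (om_bounded T ltac:(unfold PP; rewrite ERt; exact HT)) as [B HB].
  destruct Hg as (_ & _ & Hmono & Hunb). destruct (Hunb (B + 1)) as [n0 Hn0].
  assert (Hle : Rbar_le (LimSup_seq (fun n => T (prefix om n) - tau n)) (LimSup_seq (fun _ => -1))).
  { apply LimSup_le. exists n0. intros n Hn. pose proof (growth_mono tau Hmono n0 n Hn). pose proof (HB n). lra. }
  rewrite LimSup_seq_const in Hle. pose proof (Rbar_le_trans _ _ _ HL Hle) as H. simpl in H. lra.
Qed.

Lemma Tphi_tsm : test_supermartingale_in Rt phi (Tphi J M dn).
Proof.
  split. apply (Tphi_class J M HJ HM dn cd Hcd). split. apply (Tphi_tp J M HJ HM dn).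
  intros s f Hf. rewrite <- (Hpr s) in Hf. assert (f = fst (phi s)) by lra. subst f.
  destruct (Hfs s) as (A & B & C). rewrite <- (Hpr s) in C.
  apply Tphi_fair; auto.
Qed.

Lemma main_contra : False.
Proof.
  pose proof om_random as H. apply Heq in H. pose proof (gg_gt1 J M HJ HM) as Hg.
  destruct Rt eqn:ERt; unfold random in H.
  1-3: apply H; exists (Tphi J M dn); split; [rewrite <- ERt; apply Tphi_tsm|];
    apply is_LimSup_seq_unique; intros Mx N;
    pose proof (is_lim_seq_geom_p (gg M) Hg) as L; apply is_lim_seq_spec in L;
    destruct (L (2 * Mx)) as [N0 HN0]; exists (Nat.max N N0); split; [lia|];
    pose proof (om_growth (Nat.max N N0)); pose proof (HN0 (Nat.max N N0) ltac:(lia)); lra.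
  apply H. exists (Tphi J M dn), INR. split; [rewrite <- ERt; apply Tphi_tsm|]. split. apply real_growth_INR.
  replace (LimSup_seq (fun n => Tphi J M dn (prefix om n) - INR n)) with p_infty. simpl. auto.
  symmetry. apply is_LimSup_seq_unique. intros Mx N.
  destruct (growth_lin (gg M) Hg Mx N) as [n [Hn Hm]]. exists n. split. auto.
  pose proof (om_growth n). lra.
Qed.
End Contra.

Lemma INR_le_pow2 n : INR n <= 2 ^ n.
Proof. induction n. simpl; lra. rewrite S_INR. simpl. assert (1 <= 2 ^ n) by (apply pow_R1_Rle; lra). lra. Qed.

Lemma choose_params p q : 0 <= p -> p < q -> q <= 1 ->
  exists N J, (4 <= J)%nat /\ (J + 4 <= 2 ^ N)%nat /\
    p <= (INR J - 3) / INR (2 ^ N) /\ (INR J + 3) / INR (2 ^ N) <= q.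
Proof.
  intros Hp Hpq Hq.
  destruct (INR_unbounded (8 / (q - p))) as [N HN].
  set (M := (2 ^ N)%nat).
  assert (HM : INR M = 2 ^ N) by (unfold M; rewrite pow_INR; simpl; f_equal; lra).
  assert (HM8 : 8 / (q - p) < INR M) by (pose proof (INR_le_pow2 N); lra).
  assert (HMp : 0 < INR M).
  { apply Rle_lt_trans with (8 / (q - p)); auto. unfold Rdiv. left. apply Rmult_lt_0_compat. lra. apply Rinv_0_lt_compat. lra. }
  assert (H8 : 8 < INR M * (q - p)).
  { apply Rmult_lt_compat_r with (r := q - p) in HM8; [|lra]. unfold Rdiv in HM8.
    rewrite Rmult_assoc, Rinv_l in HM8; lra. }
  set (z := up (p * INR M)). destruct (archimed (p * INR M)) as [A1 A2]. fold z in A1, A2.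
  assert (Hz : (0 < z)%Z). { apply lt_IZR. simpl. nra. }
  set (K := Z.to_nat z). assert (HK : INR K = IZR z). { unfold K. rewrite INR_IZR_INZ, Z2Nat.id; auto. lia. }
  exists N, (K + 3)%nat.
  assert (HK1 : (1 <= K)%nat) by (unfold K; lia).
  assert (HJ : INR (K + 3) = IZR z + 3) by (rewrite plus_INR, HK; simpl; ring).
  fold M. split; [lia|]. split; [|split].
  - apply INR_le. rewrite plus_INR, HJ. simpl. 
    assert (p * INR M + 8 <= INR M) by nra. lra.
  - rewrite HJ. replace (IZR z + 3 - 3) with (IZR z) by ring.
    apply Rmult_le_reg_r with (INR M). auto. unfold Rdiv. rewrite Rmult_assoc, Rinv_l; lra.
  - rewrite HJ. apply Rmult_le_reg_r with (INR M). auto. unfold Rdiv. rewrite Rmult_assoc, Rinv_l by lra. nra.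
Qed.

Definition dnC (M J N : nat) (a b c : list nat -> nat) (n : nat) : nat :=
  le01 (M * a [n; N]) (M * b [n; N] + J * (c [n; N] + 1)).

Lemma le01_spec x y : (le01 x y <> 0%nat <-> (x <= y)%nat).
Proof. unfold le01. lia. Qed.

Theorem corollary13 (Rt : rtype) (phi : fsys) (p q : R) :
  forecasting_system phi -> precise phi ->
  0 <= p -> p < q -> q <= 1 ->
  (forall w : nat -> bool, random Rt phi w <-> random Rt (stat p q) w) ->
  ~ computable_fs phi /\ ~ stationary phi.
Proof.
  intros Hfs Hpr Hp Hpq Hq Heq.
  destruct (choose_params p q Hp Hpq Hq) as (N & J & HJ & HM & HpJ & HqJ).
  set (M := (2 ^ N)%nat) in *.
  assert (HMp : 0 < INR M) by (apply lt_0_INR; lia).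
  assert (HMe : INR M = 2 ^ N) by (unfold M; rewrite pow_INR; simpl; f_equal; lra).
  split.
  - intros [[qa [(a & b & c & [ca Ha] & [cb Hb] & [cc Hc] & Hform) Happ]] _].
    set (dn := dnC M J N a b c).
    assert (Hcd : is1 (CComp c_le [CComp c_mul [cst M; CComp ca [CProj 0; cst N]];
                                CComp c_add [CComp c_mul [cst M; CComp cb [CProj 0; cst N]];
                                             CComp c_mul [cst J; CComp c_add [CComp cc [CProj 0; cst N]; cst 1]]]]) dn).
    { eapply c_ext. apply u2. apply is_le.
      apply u2. apply is_mul. apply c_cst. apply c_comp2. exact Ha. apply pj; lia. apply c_cst.
      apply u2. apply is_add. apply u2. apply is_mul. apply c_cst. apply c_comp2. exact Hb. apply pj; lia. apply c_cst.
      apply u2. apply is_mul. apply c_cst. apply u2. apply is_add. apply c_comp2. exact Hc. apply pj; lia. apply c_cst. apply c_cst.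
      intros v _. reflexivity. }
    apply (main_contra J M HJ HM dn _ Hcd Rt phi p q Hfs Hpr HpJ HqJ); auto.
    + intros s Hs. unfold dn, dnC in Hs. apply le01_spec in Hs.
      specialize (Happ s N). rewrite Hform in Happ by reflexivity. simpl enc_S in Happ. simpl app in Happ.
      set (A := a [code_sit s; N]) in *. set (B := b [code_sit s; N]) in *. set (C := c [code_sit s; N]) in *.
      apply le_INR in Hs. rewrite plus_INR, !mult_INR, plus_INR in Hs. simpl (INR 1) in Hs.
      assert (HC : 0 < INR C + 1) by (pose proof (pos_INR C); lra).
      assert (Hx : (INR A - INR B) / (INR C + 1) <= INR J / INR M).
      { unfold Rdiv. apply Rmult_le_reg_r with (INR M * (INR C + 1)). nra.
        replace ((INR A - INR B) * / (INR C + 1) * (INR M * (INR C + 1))) with ((INR A - INR B) * INR M) by (field; lra).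
        replace (INR J * / INR M * (INR M * (INR C + 1))) with (INR J * (INR C + 1)) by (field; lra). nra. }
      rewrite <- HMe in Happ. apply Rabs_def2 in Happ. destruct Happ as [H1 H2].
      replace ((INR J + 1) / INR M) with (INR J / INR M + / INR M) by (field; lra). lra.
    + intros s Hs. unfold dn, dnC in Hs.
      assert (Hs' : ~ (M * a [code_sit s; N] <= M * b [code_sit s; N] + J * (c [code_sit s; N] + 1))%nat)
        by (intro Hc'; apply le01_spec in Hc'; auto).
      apply not_le in Hs'.
      specialize (Happ s N). rewrite Hform in Happ by reflexivity. simpl enc_S in Happ. simpl app in Happ.
      set (A := a [code_sit s; N]) in *. set (B := b [code_sit s; N]) in *. set (C := c [code_sit s; N]) in *.
      apply lt_INR in Hs'. rewrite plus_INR, !mult_INR, plus_INR in Hs'. simpl (INR 1) in Hs'.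
      assert (HC : 0 < INR C + 1) by (pose proof (pos_INR C); lra).
      assert (Hx : INR J / INR M < (INR A - INR B) / (INR C + 1)).
      { unfold Rdiv. apply Rmult_lt_reg_r with (INR M * (INR C + 1)). nra.
        replace ((INR A - INR B) * / (INR C + 1) * (INR M * (INR C + 1))) with ((INR A - INR B) * INR M) by (field; lra).
        replace (INR J * / INR M * (INR M * (INR C + 1))) with (INR J * (INR C + 1)) by (field; lra). nra. }
      rewrite <- HMe in Happ. apply Rabs_def2 in Happ. destruct Happ as [H1 H2].
      replace ((INR J - 1) / INR M) with (INR J / INR M - / INR M) by (field; lra). lra.
  - intros [I HI].
    set (b0 := if Rle_dec (fst I) (INR J / INR M) then 1%nat else 0%nat).
    apply (main_contra J M HJ HM (fun _ => b0) (cst b0) (c_cst b0 1) Rt phi p q Hfs Hpr HpJ HqJ); auto.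
    + intros s Hs. rewrite HI. unfold b0 in Hs. destruct Rle_dec; [|congruence].
      apply Rle_trans with (INR J / INR M); auto. unfold Rdiv. apply Rmult_le_compat_r. left; apply Rinv_0_lt_compat; auto. lra.
    + intros s Hs. rewrite HI. unfold b0 in Hs. destruct Rle_dec as [|Hn]; [discriminate|]. apply Rnot_le_lt in Hn.
      left. apply Rle_lt_trans with (INR J / INR M); auto. unfold Rdiv. apply Rmult_le_compat_r. left; apply Rinv_0_lt_compat; auto. lra.
Qed.
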